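(* Let $k\ge 1$ and let $n=t_k=\frac{k(k+1)}{2}$. Then the maximum number of edges of a locally irregular (simple) graph of order $n$ is exactly $m_k:=\frac{k(k+1)(k-1)(3k+2)}{24}$.
   Context: All graphs are finite and simple. A graph is locally irregular if no two adjacent vertices have the same degree. $t_k=1+2+\dots+k$ denotes the $k$-th triangular number. *)

(* Defs.v *)
From mathcomp Require Import all_boot.
Set Implicit Arguments. Unset Strict Implicit. Unset Printing Implicit Defensive.

Definition simple_graph (T : finType) (e : rel T) : Prop :=
  symmetric e /\ irreflexive e.

Definition deg (T : finType) (e : rel T) (x : T) : nat := #|[set y | e x y]|.

Definition nedges (T : finType) (e : rel T) : nat :=
  #|[set p : {set T} | [exists x, exists y, (x != y) && e x y && (p == [set x; y])]]|.

Definition locally_irregular (T : finType) (e : rel T) : Prop :=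
  forall x y, e x y -> deg e x != deg e y.

Definition tri (k : nat) : nat := \sum_(1 <= i < k.+1) i.

(* m_k = k(k+1)(k-1)(3k+2)/24 (always an integer) *)
Definition mk (k : nat) : nat := (k * k.+1 * k.-1 * (3 * k + 2)) %/ 24.

(* Main.v *)
Require Import Defs.
From mathcomp Require Import all_boot zify ring.
Set Implicit Arguments. Unset Strict Implicit.

Lemma triS k : tri k.+1 = tri k + k.+1.
Proof. by rewrite /tri big_nat_recr. Qed.

Lemma tri2 k : 2 * tri k = k * k.+1.
Proof. elim: k => [|k IH]; first by rewrite /tri big_geq. rewrite triS mulnDr IH; lia. Qed.

Definition sq (k : nat) := \sum_(1 <= i < k.+1) i * i.

Lemma sqS k : sq k.+1 = sq k + k.+1 * k.+1.
Proof. by rewrite /sq big_nat_recr. Qed.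

Lemma sq6 k : 6 * sq k = k * k.+1 * (2 * k + 1).
Proof. elim: k => [|k IH]; first by rewrite /sq big_geq. rewrite sqS mulnDr IH; lia. Qed.

Lemma tri_mono m n : m <= n -> tri m <= tri n.
Proof. move=> h; have := tri2 m; have := tri2 n; nia. Qed.

Lemma key_id k : 1 <= k ->
  k * k.+1 * k.-1 * (3 * k + 2) = 12 * (tri k * tri k - sq k).
Proof.
move=> hk; have h1 := tri2 k; have h2 := sq6 k.
case: k hk h1 h2 => [//|m] _ h1 h2 /=.
have h3 : 12 * (tri m.+1 * tri m.+1) = 3 * ((2 * tri m.+1) * (2 * tri m.+1)) by ring.
rewrite h1 in h3.
have h4 : 12 * sq m.+1 = 2 * (6 * sq m.+1) by ring.
rewrite h2 in h4.
rewrite mulnBr h3 h4.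
have h5 : m.+1 * m.+2 * m * (3 * m.+1 + 2) + 2 * (m.+1 * m.+2 * (2 * m.+1 + 1)) = 3 * (m.+1 * m.+2 * (m.+1 * m.+2)) by ring.
lia.
Qed.

Lemma sum_eq_ind x N (g : nat -> nat) :
  \sum_(0 <= j < N) (x == j) * g j = (x < N) * g x.
Proof.
elim: N => [|N IH]; first by rewrite big_geq.
rewrite big_nat_recr //= IH.
case: (ltngtP x N) => h.
- have -> : (x < N.+1) = true by lia. by rewrite /= addn0.
- have -> : (x < N.+1) = false by lia. done.
- have -> : (x < N.+1) = true by lia. by rewrite h /= mul0n.
Qed.

Lemma cut (F : nat -> nat) k N : F 0 = 0 -> k < N ->
  \sum_(1 <= i < k.+1) F i = \sum_(0 <= j < N) (if j <= k then F j else 0).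
Proof.
move=> F0 kN.
rewrite (big_cat_nat _ (m:=0) (n:=k.+1)) //=.

rewrite [X in _ = _ + X](eq_big_nat _ _ (F2 := fun _ => 0)); last first.
  by move=> i /andP[h _]; rewrite leqNgt h.
rewrite sum_nat_const_nat muln0 addn0.
rewrite [X in _ = X](eq_big_nat _ _ (F2 := F)); last by move=> i /andP[_ h]; rewrite -ltnS h.
by rewrite [X in _ = X]big_ltn // F0 add0n.
Qed.

Lemma greedy (T : finType) (f : T -> nat) k N :
  #|T| = tri k -> k < N -> (forall v, f v < N) ->
  (forall j, \sum_v (f v == j) <= j) -> sq k <= \sum_v f v.
Proof.
move=> cT kN fN hc.
set c := fun j => \sum_v (f v == j).
have hA : \sum_v f v = \sum_(0 <= j < N) j * c j.
  rewrite (eq_bigr (fun v => \sum_(0 <= j < N) (f v == j) * j)); last first.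
    by move=> v _; rewrite sum_eq_ind fN mul1n.
  rewrite exchange_big /=; apply: eq_bigr => j _.
  by rewrite /c [RHS]mulnC big_distrl.
have hC : \sum_(0 <= j < N) c j = tri k.
  rewrite /c exchange_big /= -cT.
  rewrite (eq_bigr (fun v => 1)); last first.
    move=> v _; have := sum_eq_ind (f v) N (fun _ => 1); rewrite fN /= muln1 => <-.
    by apply: eq_bigr => j _; rewrite muln1.
  by rewrite sum1_card.
have hT := @cut id k N (erefl 0) kN.
have hQ := @cut (fun i => i * i) k N (erefl 0) kN.
rewrite -/(tri k) in hT. rewrite -/(sq k) in hQ.
set B := fun j => if j <= k then j - c j else 0.
set C := fun j => if j <= k then 0 else c j.
have h2 : \sum_(0 <= j < N) (B j + c j) = \sum_(0 <= j < N) ((if j <= k then j else 0) + C j).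
  apply: eq_big_nat => j _; rewrite /B /C; case: ifP => _; last by [].
  by rewrite addn0 subnK // hc.
rewrite !big_split /= hC -hT in h2.
have hBC : \sum_(0 <= j < N) B j = \sum_(0 <= j < N) C j by lia.
have h1 : \sum_(0 <= j < N) ((if j <= k then j * j else 0) + k * C j)
   <= \sum_(0 <= j < N) (j * c j + k * B j).
  apply: leq_sum => j _; rewrite /B /C; case: ifP => hj.
    have := hc j; rewrite -/(c j) => hcj.
    have : j * (j - c j) <= k * (j - c j) by rewrite leq_mul2r hj orbT.
    nia.
  rewrite add0n muln0 addn0 leq_mul2r; apply/orP; right; lia.
rewrite !big_split /= -!big_distrr /= -hBC in h1.
rewrite hA hQ; lia.
Qed.

Lemma pair2 (T : finType) (x y a b : T) : x != y -> [set x; y] = [set a; b] ->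
  (x == a) && (y == b) || (x == b) && (y == a).
Proof.
move=> xy E.
have hx : x \in [set a; b] by rewrite -E set21.
have hy : y \in [set a; b] by rewrite -E set22.
case/set2P: hx => hx; case/set2P: hy => hy; rewrite hx hy ?eqxx ?orbT //=.
all: by move: xy; rewrite hx hy eqxx.
Qed.

Lemma deg_sum (T : finType) (e : rel T) v : deg e v = \sum_y (e v y : nat).
Proof.
rewrite /deg -sum1_card big_mkcond /=; apply: eq_bigr => y _; rewrite inE.
by case: (e v y).
Qed.

Lemma handshake (T : finType) (e : rel T) : simple_graph e ->
  2 * nedges e = \sum_v deg e v.
Proof.
case=> hs hi.
rewrite /nedges.
set E := [set p : {set T} | _].
rewrite (eq_bigr _ (fun v _ => deg_sum e v)).
have hxy : forall x y, (e x y : nat) = \sum_(p in E) (e x y && ([set x; y] == p) : nat).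
  move=> x y; case exy: (e x y) => /=; last by rewrite big1.
  have xE : [set x; y] \in E.
    rewrite inE; apply/existsP; exists x; apply/existsP; exists y.
    rewrite exy eqxx andbT andbT; apply/negP => /eqP xy; subst.
    by rewrite hi in exy.
  rewrite (bigD1 [set x; y]) //= eqxx big1 ?addn0 // => p /andP[_ hp].
  by rewrite eq_sym (negbTE hp).
rewrite (eq_bigr (fun x => \sum_(p in E) \sum_y (e x y && ([set x; y] == p) : nat))); last first.
  move=> x _; rewrite (eq_bigr _ (fun y _ => hxy x y)) /=.
  by rewrite exchange_big.
rewrite exchange_big /=.
rewrite (eq_bigr (fun _ => 2)).
  by rewrite sum_nat_const mulnC.
move=> p; rewrite inE => /existsP[a /existsP[b /andP[/andP[ab eab] /eqP ->]]].
rewrite pair_big /=.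
rewrite (bigD1 (a, b)) //= eab eqxx /=.
rewrite (bigD1 (b, a)) /=; last by apply/negP => /eqP [ba _]; rewrite ba eqxx in ab.
rewrite (hs b a) eab setUC eqxx /=.
rewrite big1 // => [[x y]] /= /andP[h1 h2].
case exy: (e x y) => //=.
case E2: ([set x; y] == [set a; b]) => //; move/eqP: E2 => E2.
have xy : x != y by apply/negP => /eqP xy; subst; rewrite hi in exy.
case/orP: (pair2 xy E2) => /andP[/eqP hx /eqP hy]; subst.
- by rewrite eqxx in h1.
- by rewrite eqxx in h2.
Qed.

Lemma class_bound (T : finType) (e : rel T) : simple_graph e -> locally_irregular e ->
  forall v, #|[set u | deg e u == deg e v]| + deg e v <= #|T|.
Proof.
move=> _ hli v.
have dis : [set y | e v y] :&: [set u | deg e u == deg e v] = set0.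
  apply/setP => y; rewrite !inE; apply/negP => /andP[evy /eqP dy].
  by move: (hli v y evy); rewrite dy eqxx.
have h := cardsUI [set y | e v y] [set u | deg e u == deg e v].
rewrite dis cards0 addn0 in h.
rewrite [X in X <= _]addnC /deg -/(deg e v) -h; exact: max_card.
Qed.

Lemma sum_bool_card (T : finType) (P : pred T) : \sum_u (P u : nat) = #|[set u | P u]|.
Proof.
rewrite -sum1_card [RHS]big_mkcond /=; apply: eq_bigr => u _; rewrite inE.
by case: (P u).
Qed.

Lemma sum_const_T (T : finType) c : \sum_(u : T) c = #|T| * c.
Proof. by rewrite sum_nat_const cardT -cardE. Qed.

Lemma upper k (e : rel 'I_(tri k)) : 1 <= k -> simple_graph e -> locally_irregular e ->
  nedges e <= mk k.
Proof.
move=> k1 sg li.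
set n := tri k.
have cT : #|'I_(tri k)| = n := card_ord _.
have cb := class_bound sg li.
have degn : forall v, deg e v < n.
  move=> v; have := cb v.
  have : 0 < #|[set u | deg e u == deg e v]| by apply/card_gt0P; exists v; rewrite inE.
  rewrite cT; lia.
pose f := fun v => n - deg e v.
have kn : k < n.+1 by have := tri2 k; rewrite -/n; nia.
have hg := @greedy _ f k n.+1 cT kn.
have hf : forall v, f v < n.+1 by move=> v; rewrite /f; lia.
have hc : forall j, \sum_v (f v == j) <= j.
  move=> j; case: (pickP (fun v => f v == j)) => [v /eqP fv | none]; last first.
    by rewrite big1 // => v _; rewrite none.
  rewrite (eq_bigr (fun u => (deg e u == deg e v) : nat)); last first.
    move=> u _; congr nat_of_bool; apply/eqP/eqP; rewrite /f in fv *.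
      have := degn u; have := degn v; lia.
    move=> ->; done.
  rewrite sum_bool_card; have := cb v; rewrite cT -fv /f; lia.
have hS := hg hf hc.
have hsum : \sum_v deg e v + \sum_v f v = n * n.
  rewrite -big_split /= (eq_bigr (fun _ => n)); last first.
    by move=> v _; rewrite /f subnKC // ltnW.
  by rewrite sum_const_T cT.
have hh := handshake sg.
rewrite /mk leq_divRL // (key_id k1).
move: hS hsum hh; rewrite /n; lia.
Qed.

Fixpoint blk (k v : nat) : nat :=
  if k is k'.+1 then (if v < tri k' then blk k' v else k) else 0.

Lemma blk_le k v : blk k v <= k.
Proof. elim: k => [//|k IH] /=; case: ifP => // _; exact: leq_trans IH _. Qed.

Lemma blk_pos k v : v < tri k -> 0 < blk k v.
Proof.
elim: k => [|k IH] /= hv; first by move: hv; rewrite /tri big_geq.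
by case: ifP => // h; apply: IH.
Qed.

Lemma blk_val k j u : j < k -> tri j <= u < tri j.+1 -> blk k u = j.+1.
Proof.
elim: k => [//|k IH] jk /andP[h1 h2] /=.
case: (ltngtP j k) => hjk.
- have -> : u < tri k by apply: leq_trans h2 (tri_mono hjk).
  by apply: IH => //; rewrite h1.
- lia.
- subst j; by rewrite ltnNge h1.
Qed.

Lemma blocks (F : nat -> nat) k :
  \sum_(0 <= u < tri k) F u = \sum_(0 <= j < k) \sum_(tri j <= u < tri j.+1) F u.
Proof.
elim: k => [|k IH]; first by rewrite /tri !big_geq.
rewrite big_nat_recr //= -IH (big_cat_nat _ (n := tri k)) //.
exact: tri_mono.
Qed.

Lemma tri_sum k : tri k = \sum_(0 <= j < k) j.+1.
Proof. by rewrite /tri big_add1. Qed.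

Lemma sq_sum k : sq k = \sum_(0 <= j < k) j.+1 * j.+1.
Proof. by rewrite /sq big_add1. Qed.

Lemma block_sum k (F : nat -> nat) :
  \sum_(0 <= u < tri k) F (blk k u) = \sum_(0 <= j < k) j.+1 * F j.+1.
Proof.
rewrite blocks; apply: eq_big_nat => j /andP[_ jk].
rewrite (eq_big_nat _ _ (F2 := fun _ => F j.+1)); last first.
  by move=> u hu; rewrite (blk_val jk hu).
by rewrite sum_nat_const_nat triS addnC addnK.
Qed.

Lemma ord_sum n (F : nat -> nat) : \sum_(v < n) F v = \sum_(0 <= u < n) F u.
Proof. by rewrite big_mkord. Qed.

Lemma construction k : 1 <= k ->
  exists e : rel 'I_(tri k),
      [/\ simple_graph e, locally_irregular e & nedges e = mk k].
Proof.
move=> k1.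
pose n := tri k.
pose e := [rel x y : 'I_(tri k) | blk k x != blk k y].
have sg : simple_graph e.
  by split; [move=> x y /=; rewrite eq_sym | move=> x /=; rewrite eqxx].
have hdeg : forall v : 'I_(tri k), deg e v = n - blk k v.
  move=> v; rewrite deg_sum.
  rewrite (@ord_sum _ (fun u => blk k v != blk k u)).
  rewrite (@block_sum k (fun b => blk k v != b)).
  have h1 := @sum_eq_ind (blk k v).-1 k (fun j => j.+1).
  have bp := blk_pos (ltn_ord v); have bl := @blk_le k v.
  have hb : (blk k v).-1 < k by lia.
  rewrite hb mul1n prednK // in h1.
  have h2 : \sum_(0 <= j < k) j.+1 * (blk k v != j.+1) + \sum_(0 <= j < k) ((blk k v).-1 == j) * j.+1 = n.
    rewrite -big_split /= /n [RHS]tri_sum; apply: eq_big_nat => j _.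
    have -> : ((blk k v).-1 == j) = (blk k v == j.+1) by apply/eqP/eqP; lia.
    by case: eqP => _; rewrite /= ?muln0 ?muln1 ?mul1n ?mul0n ?addn0.
  lia.
have kn : k <= n by have := tri2 k; rewrite -/n; nia.
exists e; split => //.
  move=> x y /= hxy; rewrite !hdeg.
  have := @blk_le k x; have := @blk_le k y; move: hxy; case: eqP => // hne _ hbx hby.
  apply/eqP => h; apply: hne; lia.
have hh := handshake sg.
have hsum : \sum_v deg e v + \sum_(v : 'I_(tri k)) blk k v = n * n.
  rewrite -big_split /= (eq_bigr (fun _ => n)); last first.
    move=> v _; rewrite hdeg subnK //; exact: leq_trans (@blk_le k v) kn.
  by rewrite sum_const_T card_ord.
have hs : \sum_(v : 'I_(tri k)) blk k v = sq k.
  rewrite (@ord_sum _ (fun u => blk k u)) (@block_sum k id) sq_sum //.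
rewrite /mk (key_id k1).
move: hh hsum hs; rewrite /n => hh hsum hs.
have -> : 12 * (tri k * tri k - sq k) = nedges e * 24 by lia.
by rewrite mulnK.
Qed.

Theorem lemma4 (k : nat) : 1 <= k ->
  (exists e : rel 'I_(tri k),
      [/\ simple_graph e, locally_irregular e & nedges e = mk k]) /\
  (forall e : rel 'I_(tri k),
      simple_graph e -> locally_irregular e -> nedges e <= mk k).
Proof.
move=> k1; split; first exact: construction.
by move=> e sg li; apply: upper.
Qed.
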